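(* Assume $\lambda_1<\lambda_2$ and $\lambda_1<\lambda_3$, fix $a,b>0$ and $\Delta>0$ large enough that the contour $L$ and the function $\varphi$ below are defined, and let $E_1=\{y\in\mathbb Z^2: y_2>0,y_3>0\}$. Then: (1) for every $y\in E_1$, $\sum_{z\ne y}s_{yz}(\varphi(z)-\varphi(y))=\langle (u_2^{-1},u_3^{-1}),M_F\rangle$ with $M_F=(\lambda_2-\lambda_1,\lambda_3-\lambda_1)$, in particular it does not depend on $y$; (2) there exist constants $C,\gamma>0$ such that $\sum_{z\ne y}r_{yz}(\varphi(z)-\varphi(y))\le-\gamma\,\varphi(y)$ for all $y\in E_1$ with $\varphi(y)>C$.
   Context: Markov chain $Y(n)=(y_2,y_3)\in\mathbb Z^2$ (relative coordinates of the 3-processor cascade model, time normalized so that $\lambda_1+\lambda_2+\lambda_3+\beta_{12}+\beta_{23}=1$, all parameters positive), with transition probabilities $p_{yz}=s_{yz}+r_{yz}$ for $z\ne y$. Free part: $s_{y,y+(1,0)}=\lambda_2$, $s_{y,y+(0,1)}=\lambda_3$, $s_{y,y-(1,1)}=\lambda_1$, others $0$. Rollback part ($b_2=\lambda_2/(\lambda_2+\beta_{23})$): if $y_2>0,y_3\le0$: $r_{y,(0,y_3)}=\beta_{12}$; if $y_2<y_3$: $\beta_{23}$ is added to $r_{y,(y_2,y_2)}$; if $0<y_3\le y_2$: $\beta_{12}(1-b_2)^{z_3}b_2$ is added to $r_{y,(0,z_3)}$ for $0\le z_3<y_3$ and $\beta_{12}(1-b_2)^{y_3}$ to $r_{y,(0,y_3)}$;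 if $0<y_2<y_3$: $\beta_{12}(1-b_2)^{z_3}b_2$ is added to $r_{y,(0,z_3)}$ for $0\le z_3\le y_2$ and $\beta_{12}(1-b_2)^{y_2+1}$ to $r_{y,(0,y_3)}$. Contour $L$: with $e(y)=ay_2^2+b(y_2-y_3)^2$, let $T_3$, $T_2$ be the points of the ellipse $\{e=1\}$ where the outer normal has direction $(-\Delta,1)$, resp. $(1,-\Delta)$; $K_3=(0,u_3)$ is where the tangent at $T_3$ meets the $y_3$-axis and $K_2=(u_2,0)$ where the tangent at $T_2$ meets the $y_2$-axis ($u_2,u_3>0$). $L$ consists of segment $K_3K_2$, segment $K_2T_2$, the ellipse arc $T_2T_3$ through $(-a^{-1/2},-a^{-1/2})$, and segment $T_3K_3$; each open ray from $0$ meets $L$ once. $\varphi(0)=0$ and for $y\ne0$, $\varphi(y)>0$ is the unique number with $y/\varphi(y)\in L$ (so $\varphi(y)=y_2/u_2+y_3/u_3$ on the closed positive quadrant). *)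

(* Defs.v *)
From Stdlib Require Import Reals Lra ZArith List ClassicalEpsilon.
Open Scope R_scope.

(** Points of R^2, written (y2, y3). *)
Definition pt := (R * R)%type.
Definition dot (u v : pt) : R := fst u * fst v + snd u * snd v.
Definition psub (u v : pt) : pt := (fst u - fst v, snd u - snd v).
Definition pscale (t : R) (u : pt) : pt := (t * fst u, t * snd u).
Definition cross (u v : pt) : R := fst u * snd v - snd u * fst v.

Definition ell (a b : R) (y : pt) : R := a * (fst y) ^ 2 + b * (fst y - snd y) ^ 2.
Definition ell_grad (a b : R) (y : pt) : pt :=
  (2 * a * fst y + 2 * b * (fst y - snd y), - (2 * b * (fst y - snd y))).

Definition outer_normal_dir (a b : R) (T d : pt) : Prop :=
  ell a b T = 1 /\ exists c, 0 < c /\ ell_grad a b T = pscale c d.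

Definition segment (A B : pt) (y : pt) : Prop :=
  exists t, 0 <= t <= 1 /\
    y = ((1 - t) * fst A + t * fst B, (1 - t) * snd A + t * snd B).

(** Closed arc of the ellipse {e=1} with endpoints T2, T3 that contains P:
    the points of the ellipse lying (weakly) on the same side of the chord
    line T2T3 as P. *)
Definition ellipse_arc (a b : R) (T2 T3 P : pt) (y : pt) : Prop :=
  ell a b y = 1 /\
  0 <= cross (psub T3 T2) (psub y T2) * cross (psub T3 T2) (psub P T2).

(** The contour L, with K3 = (0,u3), K2 = (u2,0). *)
Definition contour (a b : R) (T2 T3 : pt) (u2 u3 : R) (y : pt) : Prop :=
  segment (0, u3) (u2, 0) y \/
  segment (u2, 0) T2 y \/
  ellipse_arc a b T2 T3 (- / sqrt a, - / sqrt a) y \/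
  segment T3 (0, u3) y.

(** "Delta is large enough that L and phi are defined": T3, T2 are the points
    of the ellipse with outer normal direction (-Delta,1), (1,-Delta); the
    tangent at T3 meets the y3-axis at (0,u3), u3>0; the tangent at T2 meets
    the y2-axis at (u2,0), u2>0; every open ray from 0 meets L exactly once. *)
Definition contour_ok (a b D : R) (T2 T3 : pt) (u2 u3 : R) : Prop :=
  outer_normal_dir a b T3 (- D, 1) /\
  outer_normal_dir a b T2 (1, - D) /\
  0 < u3 /\ dot (ell_grad a b T3) (psub (0, u3) T3) = 0 /\
  0 < u2 /\ dot (ell_grad a b T2) (psub (u2, 0) T2) = 0 /\
  (forall y : pt, y <> (0, 0) ->
     exists! t, 0 < t /\ contour a b T2 T3 u2 u3 (pscale t y)).

Definition phi (L : pt -> Prop) (y : pt) : R :=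
  match excluded_middle_informative (y = (0, 0)) with
  | left _ => 0
  | right _ => epsilon (inhabits 0) (fun p => 0 < p /\ L (pscale (/ p) y))
  end.

Definition zpt := (Z * Z)%type.
Definition zeq (z w : zpt) : bool := (Z.eqb (fst z) (fst w) && Z.eqb (snd z) (snd w))%bool.

Definition s_free (l1 l2 l3 : R) (y z : zpt) : R :=
  (if zeq z (fst y + 1, snd y)%Z then l2 else 0)
  + (if zeq z (fst y, snd y + 1)%Z then l3 else 0)
  + (if zeq z (fst y - 1, snd y - 1)%Z then l1 else 0).

Definition r_roll (l2 b12 b23 : R) (y z : zpt) : R :=
  let y2 := fst y in let y3 := snd y in
  let z2 := fst z in let z3 := snd z in
  let b2 := l2 / (l2 + b23) in
  (if ((0 <? y2) && (y3 <=? 0) && zeq z (0, y3))%Z%bool then b12 else 0)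
  + (if ((y2 <? y3) && zeq z (y2, y2))%Z%bool then b23 else 0)
  + (if ((0 <? y3) && (y3 <=? y2) && (z2 =? 0) && (0 <=? z3) && (z3 <? y3))%Z%bool
     then b12 * (1 - b2) ^ (Z.to_nat z3) * b2 else 0)
  + (if ((0 <? y3) && (y3 <=? y2) && zeq z (0, y3))%Z%bool
     then b12 * (1 - b2) ^ (Z.to_nat y3) else 0)
  + (if ((0 <? y2) && (y2 <? y3) && (z2 =? 0) && (0 <=? z3) && (z3 <=? y2))%Z%bool
     then b12 * (1 - b2) ^ (Z.to_nat z3) * b2 else 0)
  + (if ((0 <? y2) && (y2 <? y3) && zeq z (0, y3))%Z%bool
     then b12 * (1 - b2) ^ (Z.to_nat (y2 + 1)) else 0).

(** Box [-N,N]^2, N = |y2|+|y3|+1, containing the supports of s_{y.} and r_{y.}. *)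
Definition Zrange (lo hi : Z) : list Z :=
  map (fun k => (lo + Z.of_nat k)%Z) (seq 0 (Z.to_nat (hi - lo + 1))).
Definition box (y : zpt) : list zpt :=
  let N := (Z.abs (fst y) + Z.abs (snd y) + 1)%Z in
  list_prod (Zrange (- N) N) (Zrange (- N) N).

Definition drift (p : zpt -> zpt -> R) (f : zpt -> R) (y : zpt) : R :=
  fold_right Rplus 0
    (map (fun z => if zeq z y then 0 else p y z * (f z - f y)) (box y)).

Definition in_E1 (y : zpt) : Prop := (0 < fst y)%Z /\ (0 < snd y)%Z.

(* Main.v *)
Require Import Defs.
From Stdlib Require Import Reals ZArith List Lia Lra Permutation ClassicalEpsilon Bool.
Open Scope R_scope.

Definition sumR {A} (l : list A) (g : A -> R) := fold_right Rplus 0 (map g l).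

Lemma sumR_plus {A} (l : list A) g h :
  sumR l (fun z => g z + h z) = sumR l g + sumR l h.
Proof. unfold sumR; induction l; simpl; lra. Qed.

Lemma sumR_ext {A} (l : list A) g h :
  (forall z, In z l -> g z = h z) -> sumR l g = sumR l h.
Proof. unfold sumR; induction l; simpl; intros; auto.
  rewrite H by auto. rewrite IHl; auto. Qed.

Lemma sumR_le {A} (l : list A) g h :
  (forall z, In z l -> g z <= h z) -> sumR l g <= sumR l h.
Proof. unfold sumR; induction l; simpl; intros; try lra.
  assert (fold_right Rplus 0 (map g l) <= fold_right Rplus 0 (map h l)) by (apply IHl; intros; apply H; auto).
  specialize (H a (or_introl eq_refl)). lra. Qed.

Lemma sumR_scal {A} (l : list A) c g :
  sumR l (fun z => c * g z) = c * sumR l g.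
Proof. unfold sumR; induction l; simpl; try rewrite IHl; ring. Qed.

Lemma sumR_perm {A} (l m : list A) g : Permutation l m -> sumR l g = sumR m g.
Proof. unfold sumR; induction 1; simpl; lra. Qed.

Lemma sumR_filter {A} (l : list A) (P : A -> bool) F :
  sumR l (fun z => if P z then F z else 0) = sumR (filter P l) F.
Proof. unfold sumR; induction l; simpl; auto. destruct (P a); simpl; lra. Qed.

Lemma sumR_select {A} (l m : list A) (P : A -> bool) F :
  NoDup l -> NoDup m -> (forall z, P z = true <-> In z m) ->
  (forall z, In z m -> In z l) ->
  sumR l (fun z => if P z then F z else 0) = sumR m F.
Proof.
  intros Hl Hm HP Hin. rewrite sumR_filter. apply sumR_perm.
  apply NoDup_Permutation; auto. apply NoDup_filter; auto.
  intro x; rewrite filter_In, HP. intuition.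
Qed.

Lemma sumR_nil {A} (g : A -> R) : sumR nil g = 0.
Proof. reflexivity. Qed.
Lemma sumR_one {A} (t : A) g : sumR (t :: nil) g = g t.
Proof. unfold sumR; simpl; lra. Qed.

Lemma zeq_true z w : zeq z w = true <-> z = w.
Proof. destruct z, w; unfold zeq; simpl. rewrite andb_true_iff, !Z.eqb_eq.
  split; [intros [-> ->]; auto | intros H; inversion H; auto]. Qed.

Lemma in_Zrange lo hi x : (lo <= x <= hi)%Z -> In x (Zrange lo hi).
Proof. intros H. unfold Zrange. apply in_map_iff. exists (Z.to_nat (x - lo)).
  split. lia. apply in_seq. lia. Qed.

Lemma nodup_Zrange lo hi : NoDup (Zrange lo hi).
Proof. unfold Zrange. apply NoDup_map_NoDup_ForallPairs. intros x y _ _ H; lia.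
  apply seq_NoDup. Qed.

Lemma nodup_prod {A B} (l : list A) (l' : list B) :
  NoDup l -> NoDup l' -> NoDup (list_prod l l').
Proof.
  induction 1; simpl; intros; [constructor|].
  apply NoDup_app; auto.
  - apply NoDup_map_NoDup_ForallPairs; auto. intros u v _ _ E; inversion E; auto.
  - intros [p q] Hi Hj. apply in_map_iff in Hi. destruct Hi as [w [E _]]. inversion E; subst.
    apply in_prod_iff in Hj. tauto.
Qed.

Lemma box_nodup y : NoDup (box y).
Proof. unfold box. apply nodup_prod; apply nodup_Zrange. Qed.

Lemma in_box y z :
  (Z.abs (fst z) <= Z.abs (fst y) + Z.abs (snd y) + 1)%Z ->
  (Z.abs (snd z) <= Z.abs (fst y) + Z.abs (snd y) + 1)%Z -> In z (box y).
Proof. destruct z as [z2 z3]; simpl; intros. unfold box. apply in_prod_iff.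
  split; apply in_Zrange; lia. Qed.

Lemma geom q k : sumR (seq 0 k) (fun j => q ^ j * (1 - q)) + q ^ k = 1.
Proof.
  induction k. unfold sumR; simpl; lra.
  rewrite seq_S. unfold sumR in *. rewrite map_app, fold_right_app. simpl.
  replace (fold_right Rplus (q ^ k * (1 - q) + 0) (map (fun j => q ^ j * (1 - q)) (seq 0 k)))
   with (fold_right Rplus 0 (map (fun j => q ^ j * (1 - q)) (seq 0 k)) + q ^ k * (1 - q)).
  lra.
  generalize (map (fun j => q ^ j * (1 - q)) (seq 0 k)). induction l; simpl; lra.
Qed.

Lemma phi_lin a b D T2 T3 u2 u3 x2 x3 :
  contour_ok a b D T2 T3 u2 u3 -> 0 <= x2 -> 0 <= x3 ->
  phi (contour a b T2 T3 u2 u3) (x2, x3) = x2 / u2 + x3 / u3.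
Proof.
  intros Hok H2 H3.
  destruct Hok as (_ & _ & Hu3 & _ & Hu2 & _ & Huniq).
  unfold phi. match goal with |- context [excluded_middle_informative ?P] => destruct (excluded_middle_informative P) as [E|E] end.
  - injection E as -> ->. unfold Rdiv; ring.
  - set (p0 := x2 / u2 + x3 / u3).
    assert (Hp0 : 0 < p0).
    { unfold p0. destruct (Req_dec x2 0) as [->|N2].
      - destruct (Req_dec x3 0) as [->|N3]. exfalso; apply E; auto.
        assert (0 < x3 / u3) by (apply Rdiv_lt_0_compat; lra). unfold Rdiv at 1; lra.
      - assert (0 < x2 / u2) by (apply Rdiv_lt_0_compat; lra).
        assert (0 <= x3 / u3) by (apply Rmult_le_pos; [lra| left; apply Rinv_0_lt_compat; lra]). lra. }
    assert (Q0 : 0 < p0 /\ contour a b T2 T3 u2 u3 (pscale (/ p0) (x2, x3))).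
    { split; auto. left. exists (x2 / u2 / p0). split.
      - assert (0 <= x2 / u2) by (apply Rmult_le_pos; [lra| left; apply Rinv_0_lt_compat; lra]).
        assert (0 <= x3 / u3) by (apply Rmult_le_pos; [lra| left; apply Rinv_0_lt_compat; lra]).
        split. apply Rmult_le_pos; [lra| left; apply Rinv_0_lt_compat; lra].
        apply (Rmult_le_reg_r p0); auto. unfold Rdiv at 1. rewrite Rmult_assoc, Rinv_l by lra. unfold p0 in *; lra.
      - unfold pscale; simpl. unfold p0. assert (Hs : x2 * u3 + x3 * u2 = p0 * (u2 * u3)) by (unfold p0; field; lra).
        assert (0 < p0 * (u2 * u3)) by (apply Rmult_lt_0_compat; [|apply Rmult_lt_0_compat]; lra).
        f_equal; field; lra. }
    assert (Hex : exists p, 0 < p /\ contour a b T2 T3 u2 u3 (pscale (/ p) (x2, x3))) by eauto.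
    pose proof (@epsilon_spec _ (inhabits 0) _ Hex) as Hs.
    cbv beta in Hs. set (p := epsilon _ _) in *.
    destruct (Huniq (x2, x3) E) as [t [Ht Htu]].
    assert (e1 : t = / p) by (apply Htu; split; [apply Rinv_0_lt_compat; tauto | tauto]).
    assert (e2 : t = / p0) by (apply Htu; split; [apply Rinv_0_lt_compat; tauto | tauto]).
    fold p0. rewrite <- (Rinv_inv p), <- (Rinv_inv p0). congruence.
Qed.

Ltac split_atoms :=
  repeat match goal with
  | |- context[(?x =? ?y)%Z] => destruct (Z.eqb_spec x y); try (exfalso; lia)
  | |- context[(?x <? ?y)%Z] => destruct (Z.ltb_spec x y); try (exfalso; lia)
  | |- context[(?x <=? ?y)%Z] => destruct (Z.leb_spec x y); try (exfalso; lia)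
  end; simpl.

Lemma sel_one (y t : zpt) (F : zpt -> R) :
  In t (box y) ->
  sumR (box y) (fun z => if zeq z t then F z else 0) = F t.
Proof.
  intros Hin. rewrite (sumR_select _ (t :: nil)); auto using box_nodup.
  - apply sumR_one.
  - constructor; auto. constructor.
  - intro z. rewrite zeq_true. simpl. intuition.
  - intros z [<-|[]]; auto.
Qed.

Lemma sel_col (y : zpt) (k : nat) (P : zpt -> bool) (F : zpt -> R) :
  (forall z, P z = true <-> (fst z = 0 /\ 0 <= snd z /\ snd z < Z.of_nat k)%Z) ->
  (Z.of_nat k <= Z.abs (fst y) + Z.abs (snd y) + 1)%Z ->
  sumR (box y) (fun z => if P z then F z else 0) =
  sumR (seq 0 k) (fun j => F (0%Z, Z.of_nat j)).
Proof.
  intros HP Hk.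
  rewrite (sumR_select _ (map (fun j => (0%Z, Z.of_nat j)) (seq 0 k))); auto using box_nodup.
  - unfold sumR. rewrite map_map. reflexivity.
  - apply NoDup_map_NoDup_ForallPairs. intros u v _ _ E. injection E. lia. apply seq_NoDup.
  - intros [z2 z3]. rewrite HP, in_map_iff. simpl. split.
    + intros (-> & ? & ?). exists (Z.to_nat z3). split. f_equal; lia. apply in_seq; lia.
    + intros [j [E Hj]]. injection E as <- <-. apply in_seq in Hj. lia.
  - intros z Hz. apply in_map_iff in Hz. destruct Hz as [j [<- Hj]]. apply in_seq in Hj.
    apply in_box; simpl; lia.
Qed.

Theorem lemma5 (l1 l2 l3 b12 b23 a b D : R) (T2 T3 : pt) (u2 u3 : R) :
  0 < l1 -> 0 < l2 -> 0 < l3 -> 0 < b12 -> 0 < b23 ->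
  l1 + l2 + l3 + b12 + b23 = 1 ->
  l1 < l2 -> l1 < l3 ->
  0 < a -> 0 < b -> 0 < D ->
  contour_ok a b D T2 T3 u2 u3 ->
  let ph := fun y : zpt =>
    phi (contour a b T2 T3 u2 u3) (IZR (fst y), IZR (snd y)) in
  (forall y : zpt, in_E1 y ->
     drift (s_free l1 l2 l3) ph y = dot (/ u2, / u3) (l2 - l1, l3 - l1)) /\
  (exists C gamma : R, 0 < C /\ 0 < gamma /\
     forall y : zpt, in_E1 y -> C < ph y ->
       drift (r_roll l2 b12 b23) ph y <= - gamma * ph y).
Proof.
  intros Hl1 Hl2 Hl3 Hb12 Hb23 Hsum H12 H13 Ha Hb HD Hok ph.
  assert (Hu2 : 0 < u2) by (destruct Hok as (_&_&_&_&?&_); auto).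
  assert (Hu3 : 0 < u3) by (destruct Hok as (_&_&?&_); auto).
  assert (fph : forall z2 z3, (0 <= z2)%Z -> (0 <= z3)%Z ->
            ph (z2, z3) = IZR z2 / u2 + IZR z3 / u3).
  { intros z2 z3 h2 h3. unfold ph; simpl. apply (phi_lin a b D); auto; apply IZR_le; auto. }
  split.
  - intros [y2 y3] [Hy2 Hy3]; simpl in Hy2, Hy3.
    unfold drift. fold (sumR (box (y2, y3)) (fun z => if zeq z (y2, y3) then 0
       else s_free l1 l2 l3 (y2, y3) z * (ph z - ph (y2, y3)))).
    transitivity (sumR (box (y2, y3)) (fun z =>
       (if zeq z (y2 + 1, y3)%Z then l2 * (ph z - ph (y2, y3)) else 0) +
       ((if zeq z (y2, y3 + 1)%Z then l3 * (ph z - ph (y2, y3)) else 0) +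
        (if zeq z (y2 - 1, y3 - 1)%Z then l1 * (ph z - ph (y2, y3)) else 0)))).
    { apply sumR_ext. intros [z2 z3] _. unfold s_free, zeq; simpl. split_atoms; ring. }
    rewrite !sumR_plus, !sel_one by (apply in_box; simpl; lia).
    rewrite !fph by lia. rewrite plus_IZR, !minus_IZR. rewrite plus_IZR. unfold dot; simpl. field. split; lra.
  - set (q := 1 - l2 / (l2 + b23)).
    assert (Hq : 0 < q) by (unfold q; apply (Rmult_lt_reg_r (l2 + b23)); [lra|];
      unfold Rdiv; rewrite Rmult_minus_distr_r, Rmult_assoc, Rinv_l by lra; lra).
    assert (Hb2 : 0 < l2 / (l2 + b23)) by (apply Rdiv_lt_0_compat; lra).
    set (A := / u2). set (B := / u3).
    assert (HA : 0 < A) by (apply Rinv_0_lt_compat; lra).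
    assert (HB : 0 < B) by (apply Rinv_0_lt_compat; lra).
    set (gamma := Rmin b23 (b12 * A / (A + B))).
    assert (Hg1 : gamma <= b23) by apply Rmin_l.
    assert (Hg2 : gamma * (A + B) <= b12 * A).
    { assert (gamma <= b12 * A / (A + B)) by apply Rmin_r.
      apply (Rmult_le_compat_r (A + B)) in H; [|lra].
      replace (b12 * A / (A + B) * (A + B)) with (b12 * A) in H by (field; lra). lra. }
    assert (Hg : 0 < gamma).
    { unfold gamma. apply Rmin_glb_lt; auto. apply Rdiv_lt_0_compat; [apply Rmult_lt_0_compat|]; lra. }
    exists 1, gamma. split; [lra|]. split; [auto|].
    intros [y2 y3] [Hy2 Hy3] _; simpl in Hy2, Hy3.
    assert (IZR y2 > 0) by (apply IZR_lt; lia). assert (IZR y3 > 0) by (apply IZR_lt; lia).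
    assert (Hcol : forall j : nat, (Z.of_nat j <= y3)%Z ->
      b12 * q ^ Z.to_nat (Z.of_nat j) * (1 - q) * (ph (0%Z, Z.of_nat j) - ph (y2, y3))
      <= - (b12 * IZR y2 * A) * (q ^ j * (1 - q))).
    { intros j Hj. rewrite Nat2Z.id, !fph by lia.
      assert (0 <= b12 * q ^ j * (1 - q)).
      { apply Rmult_le_pos; [apply Rmult_le_pos|]; [lra| apply pow_le; lra | unfold q; lra]. }
      apply IZR_le in Hj. unfold Rdiv. fold A B.
      assert (0 <= b12 * q ^ j * (1 - q) * B * (IZR y3 - IZR (Z.of_nat j))).
      { apply Rmult_le_pos; [apply Rmult_le_pos|]; lra. }
      nra. }
    rewrite fph by lia. unfold Rdiv; fold A B.
    unfold drift. fold (sumR (box (y2, y3)) (fun z => if zeq z (y2, y3) then 0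
       else r_roll l2 b12 b23 (y2, y3) z * (ph z - ph (y2, y3)))).
    destruct (Z_le_gt_dec y3 y2) as [Hc|Hc].
    + transitivity (sumR (box (y2, y3)) (fun z =>
       (if ((fst z =? 0) && (0 <=? snd z) && (snd z <? Z.of_nat (Z.to_nat y3)))%Z
        then b12 * q ^ Z.to_nat (snd z) * (1 - q) * (ph z - ph (y2, y3)) else 0) +
       (if zeq z (0, y3)%Z then b12 * q ^ Z.to_nat y3 * (ph z - ph (y2, y3)) else 0))).
      { right. apply sumR_ext. intros [z2 z3] _. unfold r_roll, zeq; simpl.
        fold q. replace (l2 / (l2 + b23)) with (1 - q) by (unfold q; ring).
        rewrite Z2Nat.id by lia. split_atoms; ring. }
      rewrite sumR_plus, sel_one by (apply in_box; simpl; lia).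
      rewrite (sel_col _ (Z.to_nat y3)).
      2:{ intros [z2 z3]; simpl. rewrite !andb_true_iff, Z.eqb_eq, Z.leb_le, Z.ltb_lt. tauto. }
      2:{ simpl; lia. }
      eapply Rle_trans. apply Rplus_le_compat_r. apply sumR_le.
      intros j Hj. apply in_seq in Hj. apply Hcol. lia.
      rewrite sumR_scal. pose proof (geom q (Z.to_nat y3)).
      rewrite !fph by lia. unfold Rdiv; fold A B.
      assert (0 <= gamma * B * (IZR y2 - IZR y3)).
      { apply IZR_le in Hc. apply Rmult_le_pos; [apply Rmult_le_pos|]; lra. }
      assert (0 <= IZR y2 * (b12 * A - gamma * (A + B))) by (apply Rmult_le_pos; lra).
      nra.
    + transitivity (sumR (box (y2, y3)) (fun z =>
       (if zeq z (y2, y2)%Z then b23 * (ph z - ph (y2, y3)) else 0) +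
       ((if ((fst z =? 0) && (0 <=? snd z) && (snd z <? Z.of_nat (Z.to_nat (y2 + 1))))%Z
        then b12 * q ^ Z.to_nat (snd z) * (1 - q) * (ph z - ph (y2, y3)) else 0) +
       (if zeq z (0, y3)%Z then b12 * q ^ Z.to_nat (y2 + 1) * (ph z - ph (y2, y3)) else 0)))).
      { right. apply sumR_ext. intros [z2 z3] _. unfold r_roll, zeq; simpl.
        fold q. replace (l2 / (l2 + b23)) with (1 - q) by (unfold q; ring).
        rewrite Z2Nat.id by lia. split_atoms; ring. }
      rewrite !sumR_plus, !sel_one by (apply in_box; simpl; lia).
      rewrite (sel_col _ (Z.to_nat (y2 + 1))).
      2:{ intros [z2 z3]; simpl. rewrite !andb_true_iff, Z.eqb_eq, Z.leb_le, Z.ltb_lt. tauto. }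
      2:{ simpl; lia. }
      eapply Rle_trans. apply Rplus_le_compat_l. apply Rplus_le_compat_r. apply sumR_le.
      intros j Hj. apply in_seq in Hj. apply Hcol. lia.
      rewrite sumR_scal. pose proof (geom q (Z.to_nat (y2 + 1))).
      rewrite !fph by lia. unfold Rdiv; fold A B.
      assert (0 <= gamma * B * IZR y2) by (apply Rmult_le_pos; [apply Rmult_le_pos|]; lra).
      assert (IZR y2 < IZR y3) by (apply IZR_lt; lia).
      assert (0 <= (IZR y3 - IZR y2) * B * (b23 - gamma)) by (apply Rmult_le_pos; [apply Rmult_le_pos|]; lra).
      assert (0 <= IZR y2 * (b12 * A - gamma * (A + B))) by (apply Rmult_le_pos; lra).
      nra.
Qed.
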